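(* For every positive integer $t$ and every finite graph $G$ admitting a vertex cover of size at most $t$, the hypergraph of balls in $G$ has a proper sample compression scheme of size $t+4$.
   Context: A vertex cover of $G$ is a set $R\subseteq V(G)$ meeting every edge. A hypergraph $H$ is a pair $(V(H),E(H))$ with $V(H)$ finite and $E(H)\subseteq 2^{V(H)}$. A sample of $H$ is a pair $(X^+,X^-)$ of subsets of $V(H)$ such that some $e\in E(H)$ has $X^+\subseteq e$, $X^-\cap e=\emptyset$; $\mathcal{S}(H)$ is the set of samples. $S$ realizes $(X^+,X^-)$ if $X^+\subseteq S$, $S\cap X^-=\emptyset$. A subsample of $(X^+,X^-)$ is a sample $(Y^+,Y^-)$ with $Y^\pm\subseteq X^\pm$, of size $|Y^+\cup Y^-|$. A sample compression scheme is a pair $(\kappa,\rho)$ with $\kappa:\mathcal{S}(H)\to\mathcal{S}(H)\times\{0,1\}^*$, $\rho:\mathcal{S}(H)\times\{0,1\}^*\to 2^{V(H)}$, such that for every sample the first component of $\kappa(X^+,X^-)$ is a subsample of it and $\rho(\kappa(X^+,X^-))$ realizes it; its size is $k_1+k_2$ with $k_1$ the maximum size of the subsample and $k_2$ the maximum bitstring length output by $\kappa$; it is proper if every value of $\rho$ is a hyperedge. The hypergraph of balls in $G$ has vertex set $V(G)$ and hyperedges all $B_G(c,r)=\{v:\mathrm{dist}_G(c,v)\le r\}$ for $c\in V(G)$, $r$ an integer. *)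

(* Defs.v *)
From mathcomp Require Import all_boot all_order all_algebra.
Set Implicit Arguments. Unset Strict Implicit. Unset Printing Implicit Defensive.

Definition simple_graph (T : finType) (e : rel T) : Prop :=
  symmetric e /\ irreflexive e.

Definition vertex_cover (T : finType) (e : rel T) (R : {set T}) : Prop :=
  forall x y, e x y -> (x \in R) || (y \in R).

(* dist_G(c,v) <= r  iff there is a walk c = v0, v1, ..., vk = v with k <= r
   (dist is the length of a shortest walk, +infinity if none). *)
Definition dist_le (T : finType) (e : rel T) (c v : T) (r : int) : Prop :=
  exists p : seq T, [/\ path e c p, last c p = v & ((size p)%:Z <= r)%R].

Definition is_ball (T : finType) (e : rel T) (E : {set T}) : Prop :=
  exists (c : T) (r : int), forall v, v \in E <-> dist_le e c v r.

Definition is_sample (T : finType) (e : rel T) (X : {set T} * {set T}) : Prop :=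
  exists E : {set T}, [/\ is_ball e E, X.1 \subset E & [disjoint X.2 & E]].

Definition realizes (T : finType) (S : {set T}) (X : {set T} * {set T}) : Prop :=
  X.1 \subset S /\ [disjoint S & X.2].

Definition subsample (T : finType) (e : rel T) (Y X : {set T} * {set T}) : Prop :=
  [/\ is_sample e Y, Y.1 \subset X.1 & Y.2 \subset X.2].

Definition proper_scheme (T : finType) (e : rel T) (k : nat)
  (kappa : {set T} * {set T} -> ({set T} * {set T}) * seq bool)
  (rho : ({set T} * {set T}) * seq bool -> {set T}) : Prop :=
  exists k1 k2 : nat, [/\ (k1 + k2 <= k)%N,
    (forall X, is_sample e X ->
       [/\ subsample e (kappa X).1 X,
           (#|(kappa X).1.1 :|: (kappa X).1.2| <= k1)%N,
           (size (kappa X).2 <= k2)%N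
         & realizes (rho (kappa X)) X])
  & (forall Y b, is_sample e Y -> is_ball e (rho (Y, b)))].

(* Main.v *)
Require Import Defs.
From mathcomp Require Import all_boot all_order all_algebra.
From Stdlib Require Import ClassicalEpsilon.
Set Implicit Arguments. Unset Strict Implicit. Unset Printing Implicit Defensive.

Definition bP (P : Prop) : bool := if excluded_middle_informative P then true else false.
Lemma bPE (P : Prop) : bP P <-> P.
Proof. by rewrite /bP; case: excluded_middle_informative. Qed.

Definition dl (T : finType) (e : rel T) (c v : T) (k : nat) := dist_le e c v (Posz k).
Definition ball (T : finType) (e : rel T) (c : T) (k : nat) : {set T} :=
  [set v | bP (dl e c v k)].

Lemma inball (T : finType) (e : rel T) c k v : (v \in ball e c k) <-> dl e c v k.
Proof. by rewrite inE; apply: bPE. Qed.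

Lemma dl_mono (T : finType) (e : rel T) c v k k' : dl e c v k -> k <= k' -> dl e c v k'.
Proof.
case=> p [Hp Hl Hs] Hk; exists p; split=> //.
by move: Hs; rewrite !lez_nat => Hs; apply: leq_trans Hs Hk.
Qed.

Lemma dl0 (T : finType) (e : rel T) c v : dl e c v 0 -> v = c.
Proof. by case=> [[|x p] [_ Hl Hs]]. Qed.

Lemma dl_refl (T : finType) (e : rel T) c k : dl e c c k.
Proof. by exists [::]; split. Qed.

Lemma dl_edge (T : finType) (e : rel T) c v : e c v -> dl e c v 1.
Proof. by move=> H; exists [:: v]; rewrite /= H. Qed.

Lemma dl1 (T : finType) (e : rel T) c v : dl e c v 1 -> v = c \/ e c v.
Proof.
case=> [[|x [|y p]] [Hp Hl Hs]] /=; first by left.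
  by right; move: Hp Hl => /= /andP[H _] <-.
by rewrite lez_nat in Hs.
Qed.

Lemma dl_first (T : finType) (e : rel T) c v k : dl e c v k -> v <> c -> exists u, e c u.
Proof. by case=> [[|x p] [Hp Hl Hs]] //= Hv; [case: Hv | exists x; case/andP: Hp]. Qed.

Lemma dl_twin (T : finType) (e : rel T) c c' v k : symmetric e ->
  (forall u, e c u = e c' u) -> (exists u, e c u) -> 1 < k -> dl e c v k -> dl e c' v k.
Proof.
move=> Hs Hcc [u Hu] Hk [[|x p] [Hp Hl Hz]].
  by exists [:: u; c]; split => //=; rewrite -Hcc Hu (Hs u c) Hu.
by exists (x :: p); split => //=; move: Hp => /= ; rewrite Hcc.
Qed.

Lemma is_ball_ball (T : finType) (e : rel T) c k : is_ball e (ball e c k).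
Proof. by exists c, (Posz k) => v; rewrite inball. Qed.

Lemma is_ball0 (T : finType) (e : rel T) (c : T) : is_ball e set0.
Proof.
exists c, (-1)%R => v; rewrite inE; split=> //.
by case=> p [_ _ Hs].
Qed.

Lemma real_ball (T : finType) (e : rel T) (Xp Xm : {set T}) c k :
  (forall x, x \in Xp -> dl e c x k) -> (forall v, dl e c v k -> v \notin Xm) ->
  realizes (ball e c k) (Xp, Xm).
Proof.
move=> H1 H2; split => /=.
  by apply/subsetP => x Hx; apply/inball; apply: H1.
by rewrite disjoint_subset; apply/subsetP => v /inball /H2; rewrite inE.
Qed.

From mathcomp Require Import zify.
From Stdlib Require Import Classical IndefiniteDescription.

Definition decS (T : finType) (R : {set T}) (code : seq bool) : {set T} :=
  [set u in R | nth false code (index u (enum R))].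

Lemma decS_map (T : finType) (R : {set T}) (f : T -> bool) :
  decS R [seq f u | u <- enum R] = [set u in R | f u].
Proof.
apply/setP => u; rewrite !inE; case Hu: (u \in R) => //=.
by rewrite (nth_map u) ?index_mem ?mem_enum // nth_index ?mem_enum.
Qed.

Definition twins (T : finType) (e : rel T) (S : {set T}) : {set T} :=
  [set v | [forall u, e v u == (u \in S)]].

Lemma twinsP (T : finType) (e : rel T) S v : v \in twins e S -> forall u, e v u = (u \in S).
Proof. by rewrite inE => /forallP H u; apply/eqP. Qed.

Definition rk (T : finType) (v : T) : nat := enum_rank v.

Lemma rk_inj (T : finType) : injective (@rk T).
Proof. by move=> x y /val_inj /enum_rank_inj. Qed.

Definition leastr (T : finType) (e : rel T) (c p : T) (lo : nat) : nat :=
  match excluded_middle_informative (exists k, (lo <= k) && bP (dl e c p k)) with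
  | left H => ex_minn H | right _ => 0 end.

Lemma leastrE (T : finType) (e : rel T) c p lo r : lo <= r -> dl e c p r ->
  (forall k, lo <= k -> dl e c p k -> r <= k) -> leastr e c p lo = r.
Proof.
move=> Hlo Hr Hmin; rewrite /leastr; case: excluded_middle_informative => [H|H].
  case: ex_minnP => m /andP[Hm /bPE Hdm] Hm'.
  apply/eqP; rewrite eqn_leq Hmin // andbT; apply: Hm'.
  by rewrite Hlo; apply/bPE.
by exfalso; apply: H; exists r; rewrite Hlo; apply/bPE.
Qed.

Definition rho (T : finType) (e : rel T) (R : {set T})
  (Yb : ({set T} * {set T}) * seq bool) : {set T} :=
  match Yb.2 with
  | [:: false, false, true & code] =>
      match [pick u in decS R code], [pick p in Yb.1.1] with
      | Some c, Some p => ball e c (leastr e c p 0) | _, _ => set0 end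
  | [:: false, true, false & _] =>
      if [pick y in Yb.1.1] is Some y then ball e y 0 else set0
  | [:: false, true, true & _] =>
      if [pick y in Yb.1.1] is Some y then ball e y 1 else set0
  | [:: true, false, false & code] =>
      match [pick v in twins e (decS R code)], [pick p in Yb.1.1] with
      | Some c, Some p => ball e c (leastr e c p 2) | _, _ => set0 end
  | [:: true, false, true & code] =>
      match [pick v in twins e (decS R code) |
               [forall u in twins e (decS R code), rk v <= rk u]] with
      | Some c => ball e c 1 | None => set0 end
  | [:: true, true, false & code] =>
      match [pick w in Yb.1.2] with
      | Some w =>
        match [pick v in twins e (decS R code) | (rk w < rk v) &&
               [forall u in twins e (decS R code), (rk w < rk u) ==> (rk v <= rk u)]] with
        | Some c => ball e c 1 | None => set0 end
      | None => set0 end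
  | _ => set0
  end.

Lemma rho_ball (T : finType) (e : rel T) R Yb (c0 : T) : is_ball e (rho e R Yb).
Proof.
rewrite /rho.
repeat match goal with |- context[match ?x with _ => _ end] => destruct x end;
  first [apply: is_ball_ball | apply: (is_ball0 e c0)].
Qed.

Lemma pick1 (T : finType) (p : T) : [pick x in [set p]] = Some p.
Proof.
case: pickP => [x /set1P -> //|/(_ p)]; by rewrite set11.
Qed.

Lemma sub_sample (T : finType) (e : rel T) (Y X : {set T} * {set T}) :
  is_sample e X -> Y.1 \subset X.1 -> Y.2 \subset X.2 -> subsample e Y X.
Proof.
move=> [E [HE H1 H2]] S1 S2; split=> //; exists E; split=> //.
  exact: subset_trans S1 H1.
exact: disjointWl S2 H2.
Qed.

Definition good (T : finType) (e : rel T) (R : {set T}) (t : nat)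
  (X : {set T} * {set T}) (Yb : ({set T} * {set T}) * seq bool) : Prop :=
  [/\ subsample e Yb.1 X, #|Yb.1.1 :|: Yb.1.2| <= 1, size Yb.2 <= t + 3
    & realizes (rho e R Yb) X].

Lemma main_ex (T : finType) (e : rel T) (R : {set T}) (t : nat) :
  simple_graph e -> vertex_cover e R -> #|R| <= t ->
  forall X, is_sample e X -> exists Yb, good e R t X Yb.
Proof.
move=> [Hsym Hirr] Hcov HRt [Xp Xm] HX.
have HX' := HX; move: HX' => [E [[c [r HE]] HsubE HdisE]] /=.
have Hout : forall v, v \in Xm -> ~ dist_le e c v r.
  by move=> v Hv /HE Hv'; move: (disjointFr HdisE Hv); rewrite Hv'.
have Hin : forall x, x \in Xp -> dist_le e c x r.
  by move=> x Hx; apply/HE; apply: (subsetP HsubE).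
have Hsz : 3 <= t + 3 by rewrite leq_addl.
case: (set_0Vmem Xp) => [Xp0 | [x0 Hx0]].
  exists ((set0, set0), [:: false; false; false]); split => //=.
  - by apply: sub_sample => //=; rewrite ?Xp0 sub0set.
  - by rewrite setU0 cards0.
  - rewrite /rho /=; split; first by rewrite Xp0 sub0set.
    by apply/pred0P => v; rewrite !inE.
have [rn Hrn] : exists rn, r = Posz rn.
  case: r HE Hout Hin => [n|n] HE Hout Hin; first by exists n.
  by case: (Hin x0 Hx0) => p [_ _].
subst r.
have Hex : exists k, bP (forall x, x \in Xp -> dl e c x k).
  by exists rn; apply/bPE => x Hx; apply: Hin.
case: (ex_minnP Hex) => r' /bPE Hr' Hmin'.
have Hr'n : r' <= rn by apply: Hmin'; apply/bPE => x Hx; apply: Hin.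
have Hbad : forall v k, k <= r' -> dl e c v k -> v \notin Xm.
  move=> v k Hk Hv; apply/negP => Hvm; apply: (Hout v Hvm).
  by apply: (dl_mono Hv); apply: leq_trans Hr'n.
have [p Hp [Hpr Hpmin]] : exists2 p, p \in Xp & dl e c p r' /\ forall k, dl e c p k -> r' <= k.
  case: r' Hr' Hmin' Hr'n Hbad => [|s] Hr' Hmin' Hr'n Hbad.
    by exists x0 => //; split => //; apply: Hr'.
  case: (classic (exists2 p, p \in Xp & ~ dl e c p s)) => [[p Hp Hnp]|Hno].
    exists p => //; split; first by apply: Hr'.
    move=> k Hk; rewrite ltnNge; apply/negP => Hks; apply: Hnp.
    exact: dl_mono Hk Hks.
  exfalso; have : s.+1 <= s; last by rewrite ltnn.
  apply: Hmin'; apply/bPE => x Hx; apply: NNPP => Hn; apply: Hno; by exists x.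
have Hreal : realizes (ball e c r') (Xp, Xm).
  by apply: real_ball => // v; apply: Hbad.
have Hsamp1 : forall q, q \in Xp -> subsample e ([set q], set0) (Xp, Xm).
  by move=> q Hq; apply: sub_sample => //=; rewrite ?sub0set ?sub1set.
have Hcard1 : forall q : T, #|[set q] :|: set0| <= 1 by move=> q; rewrite setU0 cards1.
case HcR: (c \in R).
  exists (([set p], set0), [:: false, false, true & [seq u == c | u <- enum R]]).
  split => //=; [exact: Hsamp1 | by rewrite size_map -cardE addn3 !ltnS |].
  rewrite /rho /= decS_map pick1.
  case: pickP => [c1 | /(_ c)]; last by rewrite !inE HcR eqxx.
  rewrite !inE => /andP[_ /eqP ->].
  by rewrite (leastrE (r := r')) // => k _ /Hpmin.
set S := [set u | e c u].
have HSR : S \subset R.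
  apply/subsetP => u; rewrite inE => Hu.
  by move: (Hcov _ _ Hu); rewrite HcR.
have HdecS : decS R [seq u \in S | u <- enum R] = S.
  rewrite decS_map; apply/setP => u; rewrite !inE.
  case Hu: (e c u); rewrite ?andbT ?andbF //.
  by apply: (subsetP HSR); rewrite inE.
have Hszc : size [seq u \in S | u <- enum R] <= t by rewrite size_map -cardE.
set C := twins e S.
have HcC : c \in C by rewrite inE; apply/forallP => u; rewrite inE.
have HcXm : c \notin Xm by apply: (Hbad c 0) => //; apply: dl_refl.
case: r' Hr' Hmin' Hr'n Hbad Hreal Hpr Hpmin => [|[|s]] Hr' Hmin' Hr'n Hbad Hreal Hpr Hpmin.
-
  have Hpc := dl0 Hpr; subst p.
  exists (([set c], set0), [:: false, true, false & [::]]).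
  split => /=; [exact: Hsamp1 | exact: Hcard1 | exact: Hsz | by rewrite /rho /= pick1].
-
  case HcXp: (c \in Xp).
    exists (([set c], set0), [:: false, true, true & [::]]).
    split => /=; [exact: Hsamp1 | exact: Hcard1 | exact: Hsz | by rewrite /rho /= pick1].
  have HB3 : forall cs, cs \in C -> cs \notin Xm -> realizes (ball e cs 1) (Xp, Xm).
    move=> cs Hcs Hcsm; apply: real_ball.
      move=> x Hx; case: (dl1 (Hr' x Hx)) => [Hxc|Hcx].
        by move: Hx; rewrite Hxc HcXp.
      by apply: dl_edge; rewrite (twinsP Hcs) inE.
    move=> v /dl1 [-> //|Hv]; apply: (Hbad v 1) => //; apply: dl_edge.
    by move: Hv; rewrite (twinsP Hcs) inE.
  case: (classic (exists w, [&& w \in C, w \in Xm & rk w < rk c])) => [[w0 Hw0]|Hno].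
  +
    case: (@arg_maxnP T w0 (fun w => [&& w \in C, w \in Xm & rk w < rk c]) (@rk T) Hw0) => wm /and3P[HwC HwX Hwc] Hwmax.
    exists ((set0, [set wm]), [:: true, true, false & [seq u \in S | u <- enum R]]).
    split => //=.
    * by apply: sub_sample => //=; rewrite ?sub0set ?sub1set.
    * by rewrite set0U cards1.
    * by rewrite addn3 !ltnS.
    rewrite /rho /= pick1 HdecS.
    case: pickP => [cs /andP[Hcs /andP[Hwcs /forall_inP Hcsmin]] | Hnone].
      apply: HB3 => //; apply/negP => Hcsm.
      have Hcsc : rk cs <= rk c by apply: (implyP (Hcsmin c HcC)); apply: Hwc.
      have Hne : cs != c by apply/eqP => Heq; move: HcXm; rewrite -Heq Hcsm.
      have Hlt : rk cs < rk c.
        rewrite ltn_neqAle Hcsc andbT; apply/eqP => /rk_inj Heq; by rewrite Heq eqxx in Hne.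
      have := Hwmax cs; rewrite /= Hcs Hcsm Hlt => /(_ isT) Hle; by rewrite ltnNge Hle in Hwcs.
    exfalso.
    have Hc' : (c \in C) && (rk wm < rk c) by rewrite HcC.
    case: (@arg_minnP T c (fun v => (v \in C) && (rk wm < rk v)) (@rk T) Hc') => m /andP[HmC Hwm] Hmmin.
    move: (Hnone m); rewrite HmC Hwm /=; move/negP; apply.
    apply/forall_inP => u Hu; apply/implyP => Hwu; apply: Hmmin; by rewrite Hu.
  + exists ((set0, set0), [:: true, false, true & [seq u \in S | u <- enum R]]).
    split => //=.
    * by apply: sub_sample => //=; rewrite ?sub0set.
    * by rewrite setU0 cards0.
    * by rewrite addn3 !ltnS.
    rewrite /rho /= HdecS.
    case: pickP => [cs /andP[Hcs /forall_inP Hcsmin] | Hnone].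
      apply: HB3 => //; apply/negP => Hcsm.
      have Hcsc : rk cs <= rk c by apply: Hcsmin.
      have Hne : cs != c by apply/eqP => Heq; move: HcXm; rewrite -Heq Hcsm.
      have Hlt : rk cs < rk c.
        rewrite ltn_neqAle Hcsc andbT; apply/eqP => /rk_inj Heq; by rewrite Heq eqxx in Hne.
      by apply: Hno; exists cs; rewrite Hcs Hcsm Hlt.
    exfalso.
    case: (@arg_minnP T c (fun v => v \in C) (@rk T) HcC) => m HmC Hmmin.
    move: (Hnone m); rewrite HmC /=; move/negP; apply.
    by apply/forall_inP => u Hu; apply: Hmmin.
-
  exists (([set p], set0), [:: true, false, false & [seq u \in S | u <- enum R]]).
  split => //=; [exact: Hsamp1 | by rewrite addn3 !ltnS |].
  rewrite /rho /= HdecS pick1.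
  case: pickP => [c' Hc' | /(_ c)]; last by rewrite HcC.
  have Hpc : p <> c.
    by move=> Hpc; subst p; move: (Hpmin 0 (dl_refl e c 0)).
  have [u0 Hu0] := dl_first Hpr Hpc.
  have Hcc : forall u, e c u = e c' u by move=> u; rewrite (twinsP Hc') inE.
  have Hu0' : exists u, e c' u by exists u0; rewrite -Hcc.
  have Hcc' : forall u, e c' u = e c u by move=> u; rewrite Hcc.
  have Heqv : forall v k, 1 < k -> dl e c v k <-> dl e c' v k.
    move=> v k Hk; split; [exact: dl_twin Hsym Hcc (ex_intro _ u0 Hu0) Hk
                          | exact: dl_twin Hsym Hcc' Hu0' Hk].
  rewrite (leastrE (r := s.+2)) //.
  + apply: real_ball => [x Hx|v Hv].
      by apply/Heqv => //; apply: Hr'.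
    by apply: (Hbad v s.+2) => //; apply/Heqv.
  + by apply/Heqv.
  + by move=> k Hk /Heqv; move=> /(_ Hk) /Hpmin.
Qed.

Theorem theorem1p3 (t : nat) (T : finType) (e : rel T) :
  (0 < t)%N -> simple_graph e ->
  (exists R : {set T}, vertex_cover e R /\ (#|R| <= t)%N) ->
  exists kappa rho, proper_scheme e (t + 4) kappa rho.
Proof.
move=> _ Hg [R [Hcov HRt]].
have H : forall X, exists Yb, is_sample e X -> good e R t X Yb.
  move=> X; case: (classic (is_sample e X)) => [Hs|Hn].
    by have [Yb HYb] := main_ex Hg Hcov HRt Hs; exists Yb.
  by exists ((set0, set0), [::]).
exists (fun X => proj1_sig (constructive_indefinite_description _ (H X))), (rho e R).
exists 1, (t + 3); split.
- by rewrite addnC -addnA.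
- move=> X HX; case: constructive_indefinite_description => Yb /= /(_ HX).
  by case.
- move=> Y b [E [[c0 _] _ _]]; exact: rho_ball.
Qed.
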